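(* (i) A diagonal matrix $D=\mathrm{diag}(z_1,z_2,z_3,z_4)\in U(4)$ can be written as $D=D_1\otimes D_2$ with $D_1,D_2$ diagonal elements of $U(2)$ if and only if $z_1z_2^{-1}z_3^{-1}z_4=1$. (ii) Every $4\times 4$ unitary matrix that is diagonal in the computational basis can be implemented, up to a global phase, by a circuit of at most five elementary gates.
   Context: The computational basis of $\mathbb{C}^2\otimes\mathbb{C}^2$ is $|00\rangle,|01\rangle,|10\rangle,|11\rangle$ in this order, and $\otimes$ is the Kronecker product. The elementary gates are the $4\times 4$ matrices of the following forms: $R_y(\theta)\otimes \mathbf{1}$ or $\mathbf{1}\otimes R_y(\theta)$, where $R_y(\theta)=\begin{pmatrix}\cos\theta/2 & \sin\theta/2\\ -\sin\theta/2 & \cos\theta/2\end{pmatrix}$; $R_z(\alpha)\otimes\mathbf{1}$ or $\mathbf{1}\otimes R_z(\alpha)$, where $R_z(\alpha)=\mathrm{diag}(e^{-i\alpha/2},e^{i\alpha/2})$ ($\theta,\alpha$ real); and the two CNOT gates, namely the permutation matrix swapping $|10\rangle\leftrightarrow|11\rangle$ and the permutation matrix swapping $|01\rangle\leftrightarrow|11\rangle$. A circuit computes the product of its gate matrices; implementing $U$ up to global phase means the product equals $cU$ for some $|c|=1$. *)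

(* Defs.v *)
From mathcomp Require Import all_boot all_order all_algebra.
From mathcomp Require Import reals trigo.
From mathcomp Require Import complex mxtens.
Set Implicit Arguments. Unset Strict Implicit. Unset Printing Implicit Defensive.
Import Order.TTheory GRing.Theory Num.Theory.
Local Open Scope ring_scope.
Local Open Scope complex_scope.

Definition adjmx (R : realType) (m n : nat) (A : 'M[R[i]]_(m, n)) : 'M[R[i]]_(n, m) :=
  (map_mx (@conjc R) A)^T.
Definition unitary_mx (R : realType) (n : nat) (U : 'M[R[i]]_n) : Prop :=
  U *m adjmx U = 1%:M.

(* Kronecker product of 2x2 matrices: basis |00>,|01>,|10>,|11> = 0,1,2,3,
   index of |ab> is 2a+b (mxtens convention). *)
Definition kron2 (R : realType) (A B : 'M[R[i]]_2) : 'M[R[i]]_4 := tensmx A B.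

Definition Ry (R : realType) (theta : R) : 'M[R[i]]_2 :=
  \matrix_(i < 2, j < 2)
    (if (i == 0) && (j == 0) then (cos (theta / 2))%:C
     else if (i == 0) && (j == 1) then (sin (theta / 2))%:C
     else if (i == 1) && (j == 0) then (- sin (theta / 2))%:C
     else (cos (theta / 2))%:C).

Definition expi (R : realType) (t : R) : R[i] := (cos t +i* sin t)%C.

Definition Rz (R : realType) (alpha : R) : 'M[R[i]]_2 :=
  \matrix_(i < 2, j < 2)
    (if i != j then 0
     else if i == 0 then expi (- alpha / 2) else expi (alpha / 2)).

Definition perm4 (R : realType) (f : 'I_4 -> 'I_4) : 'M[R[i]]_4 :=
  \matrix_(i < 4, j < 4) (if f j == i then 1 else 0).

(* swap |10> <-> |11>, i.e. indices 2 <-> 3 *)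
Definition cnot12 (R : realType) : 'M[R[i]]_4 :=
  perm4 R (fun k : 'I_4 => if k == 2%:R then 3%:R else if k == 3%:R then 2%:R else k).
(* swap |01> <-> |11>, i.e. indices 1 <-> 3 *)
Definition cnot21 (R : realType) : 'M[R[i]]_4 :=
  perm4 R (fun k : 'I_4 => if k == 1%:R then 3%:R else if k == 3%:R then 1%:R else k).

Inductive gate (R : realType) : Type :=
| RyL of R
| RyR of R
| RzL of R
| RzR of R
| CNOT12
| CNOT21.

Definition gate_mx (R : realType) (g : gate R) : 'M[R[i]]_4 :=
  match g with
  | RyL t => kron2 (Ry t) 1%:M
  | RyR t => kron2 1%:M (Ry t)
  | RzL a => kron2 (Rz a) 1%:M
  | RzR a => kron2 1%:M (Rz a)
  | CNOT12 => cnot12 R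
  | CNOT21 => cnot21 R
  end.

Definition circuit_mx (R : realType) (c : seq (gate R)) : 'M[R[i]]_4 :=
  foldr (fun g M => gate_mx g *m M) 1%:M c.

Definition implements_up_to_phase (R : realType) (c : seq (gate R)) (U : 'M[R[i]]_4) : Prop :=
  exists ph : R[i], `|ph| = 1 /\ circuit_mx c = ph *: U.

(* Main.v *)
Require Import Defs.
From mathcomp Require Import all_boot all_order all_algebra.
From mathcomp Require Import reals trigo.
From mathcomp Require Import complex mxtens.
From mathcomp Require Import ring lra.
Import Order.TTheory GRing.Theory Num.Theory.
Local Open Scope ring_scope.

Lemma sum4 (V : nmodType) (F : 'I_4 -> V) :
  \sum_(k < 4) F k = F 0 + F 1 + F 2 + F 3.
Proof. rewrite !big_ord_recl big_ord0 addr0 !addrA. by congr (F _ + F _ + F _ + F _); apply: val_inj. Qed.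

Ltac case4 i := case: i => [[|[|[|[|?]]]] ?] //.

Section S.
Variable R : realType.

Lemma cnot_diag (f : nat -> R[i]) :
  cnot12 R *m diag_mx (\row_k f (val k)) *m cnot12 R =
  diag_mx (\row_k f (if val k == 2%N then 3%N else if val k == 3%N then 2%N else val k)).
Proof.
apply/matrixP => i j; rewrite mul_mx_diag !mxE sum4 !mxE.
case4 i; case4 j; rewrite /= ?mxE /=.
all: rewrite ?(mulr0, mul0r, addr0, add0r, mulr1, mul1r) //.
Qed.

Lemma RzL_diag (a : R) : gate_mx (RzL a) =
  diag_mx (\row_k (if (val k < 2)%N then expi (- a / 2) else expi (a / 2))).
Proof.
apply/matrixP => i j; rewrite /= /kron2 !mxE.
case4 i; case4 j; rewrite /= ?mxE /=.
all: rewrite ?(mulr0, mul0r, addr0, add0r, mulr1, mul1r) //.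
Qed.

Lemma RzR_diag (a : R) : gate_mx (RzR a) =
  diag_mx (\row_k (if odd (val k) then expi (a / 2) else expi (- a / 2))).
Proof.
apply/matrixP => i j; rewrite /= /kron2 !mxE.
case4 i; case4 j; rewrite /= ?mxE /=.
all: rewrite ?(mulr0, mul0r, addr0, add0r, mulr1, mul1r) //.
Qed.

Local Open Scope complex_scope.


Lemma expiD (s t : R) : expi (s + t) = expi s * expi t.
Proof.
rewrite /expi cosD sinD /=. congr (_ +i* _); ring.
Qed.

Lemma norm_expi (t : R) : `|expi t| = 1.
Proof.
rewrite normc_def /= cos2Dsin2 sqrtr1 //.
Qed.

Lemma unit_expi (u : R[i]) : u * conjc u = 1 -> exists t, u = expi t.
Proof.
case: u => a b /= [] H _.
have H1 : a ^+ 2 + b ^+ 2 = 1 by rewrite -H; ring.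
have Ha : a \in `[(-1), 1].
  rewrite in_itv /=; apply/andP; split; nra.
have Hs : sin (acos a) = `|b|.
  rewrite sin_acos; last by move: Ha; rewrite in_itv.
  by rewrite -H1 addrC addKr sqrtr_sqr.
case: (lerP 0 b) => hb.
  exists (acos a); rewrite /expi Hs acosK // ger0_norm //.
exists (- acos a); rewrite /expi cosN sinN Hs acosK // ltr0_norm // opprK //.
Qed.


Local Close Scope complex_scope.


Lemma adj_diag n (d : 'rV[R[i]]_n) :
  adjmx (diag_mx d) = diag_mx (\row_k conjc (d 0 k)).
Proof.
apply/matrixP => i j; rewrite /adjmx !mxE eq_sym.
by case: eqP => [->|_]; rewrite ?mulr1n ?mulr0n ?conjc0.
Qed.

Lemma unitary_diagP n (d : 'rV[R[i]]_n) :
  unitary_mx (diag_mx d) <-> forall k, d 0 k * conjc (d 0 k) = 1.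
Proof.
rewrite /unitary_mx adj_diag mulmx_diag; split.
  by move/matrixP => H k; move: (H k k); rewrite !mxE eqxx !mulr1n.
move=> H; apply/matrixP => i j; rewrite !mxE H.
by case: (i == j).
Qed.

Lemma natfun n (d : 'rV[R[i]]_n.+1) : exists f : nat -> R[i], forall k, d 0 k = f (val k).
Proof. by exists (fun m => d 0 (inord m)) => k; rewrite inord_val. Qed.

Lemma part1 (z : 'rV[R[i]]_4) :
      unitary_mx (diag_mx z) ->
      ((exists D1 D2 : 'M[R[i]]_2,
           is_diag_mx D1 /\ unitary_mx D1 /\ is_diag_mx D2 /\ unitary_mx D2 /\
           diag_mx z = kron2 D1 D2)
       <-> z 0 0 * (z 0 1)^-1 * (z 0 2)^-1 * z 0 3 = 1).
Proof.
move=> /unitary_diagP Hz.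
have [zz Ez] := natfun _ z.
have nz k : zz k * conjc (zz k) = 1 -> zz k != 0.
  by move=> H; apply/eqP => e; move: H; rewrite e mul0r => /eqP; rewrite eq_sym oner_eq0.
have H0 := Hz (@Ordinal 4 0 isT); have H1 := Hz (@Ordinal 4 1 isT).
have H2 := Hz (@Ordinal 4 2 isT); have H3 := Hz (@Ordinal 4 3 isT).
rewrite !Ez /= in H0 H1 H2 H3.
have n0 := nz _ H0; have n1 := nz _ H1; have n2 := nz _ H2; have n3 := nz _ H3.
have -> : z 0 0 = zz 0%N by rewrite Ez.
have -> : z 0 1 = zz 1%N by rewrite Ez.
have -> : z 0 2 = zz 2%N by rewrite Ez.
have -> : z 0 3 = zz 3%N by rewrite Ez.
split.
- move=> [D1 [D2 [/diag_mxP [d1 ->] [_ [/diag_mxP [d2 ->] [_ E]]]]]].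
  have [a Ea] := natfun _ d1; have [b Eb] := natfun _ d2.
  have F (i j : 'I_2) : zz (val (mxtens_index (i, j))) = a (val i) * b (val j).
    move: (congr1 (fun M : 'M[R[i]]_(2 * 2) => M (mxtens_index (i, j)) (mxtens_index (i, j))) E).
    by rewrite /kron2 tensmxE !mxE !eqxx !mulr1n Ez Ea Eb.
  have F0 : zz 0%N = a 0%N * b 0%N by exact: (F (@Ordinal 2 0 isT) (@Ordinal 2 0 isT)).
  have F1 : zz 1%N = a 0%N * b 1%N by exact: (F (@Ordinal 2 0 isT) (@Ordinal 2 1 isT)).
  have F2 : zz 2%N = a 1%N * b 0%N by exact: (F (@Ordinal 2 1 isT) (@Ordinal 2 0 isT)).
  have F3 : zz 3%N = a 1%N * b 1%N by exact: (F (@Ordinal 2 1 isT) (@Ordinal 2 1 isT)).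
  rewrite F1 in n1; rewrite F2 in n2.
  move: n1 n2; rewrite !mulf_eq0 !negb_or => /andP[na0 nb1] /andP[na1 nb0].
  rewrite F0 F1 F2 F3; field.
  by rewrite na0 nb1 na1 nb0.
- move=> h.
  have e : zz 0%N * zz 3%N = zz 1%N * zz 2%N.
    by rewrite -[RHS]mul1r -h; field; rewrite n1 n2.
  have e3 : zz 3%N = zz 2%N / zz 0%N * zz 1%N.
    by apply: (mulfI n0); rewrite e; field; rewrite n0.
  exists (diag_mx (\row_(k < 2) if val k == 0%N then 1 else zz 2%N / zz 0%N)).
  exists (diag_mx (\row_(k < 2) if val k == 0%N then zz 0%N else zz 1%N)).
  split; first exact: diag_mx_is_diag.
  split.
    apply/unitary_diagP => k; rewrite mxE; case: ifP => _.
      by rewrite conjc1 mulr1.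
    by rewrite rmorphM /= conjc_inv mulrACA -invfM H2 H0 invr1 mulr1.
  split; first exact: diag_mx_is_diag.
  split.
    apply/unitary_diagP => k; rewrite mxE; case: ifP => _ //.
  apply/matrixP => p q; case: (@mxtens_indexP 2 2 p) => i j; case: (@mxtens_indexP 2 2 q) => k l.
  rewrite /kron2 !mxE !mxtens_indexK /= Ez.
  case: i => [[|[|?]] ?] //; case: j => [[|[|?]] ?] //; case: k => [[|[|?]] ?] //; case: l => [[|[|?]] ?] //=.
  all: rewrite ?mulr1n ?mulr0n ?mulr0 ?mul0r ?mul1r ?divfK //.
Qed.

Lemma part2 (U : 'M[R[i]]_4) :
  unitary_mx U -> is_diag_mx U ->
  exists c : seq (gate R), (size c <= 5)%N /\ implements_up_to_phase c U.
Proof.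
move=> Hu /diag_mxP [d Ed]; subst U; move/unitary_diagP: Hu => Hd.
have [f Ef] := natfun _ d.
have := Hd (@Ordinal 4 0 isT); rewrite Ef /= => /unit_expi [p0 e0].
have := Hd (@Ordinal 4 1 isT); rewrite Ef /= => /unit_expi [p1 e1].
have := Hd (@Ordinal 4 2 isT); rewrite Ef /= => /unit_expi [p2 e2].
have := Hd (@Ordinal 4 3 isT); rewrite Ef /= => /unit_expi [p3 e3].
pose a := (p2 + p3 - p1 - p0) / 2.
pose b := (p1 + p3 - p2 - p0) / 2.
pose c := (p1 + p2 - p0 - p3) / 2.
pose del := - (p0 + p1 + p2 + p3) / 4.
exists [:: RzL a; RzR b; (@CNOT12 R); RzR c; (@CNOT12 R)]; split => //.
exists (expi del); split; first exact: norm_expi.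
have -> : circuit_mx [:: RzL a; RzR b; (@CNOT12 R); RzR c; (@CNOT12 R)] =
  gate_mx (RzL a) *m (gate_mx (RzR b) *m (cnot12 R *m (gate_mx (RzR c) *m (cnot12 R *m 1%:M)))) by [].
rewrite mulmx1 RzL_diag !RzR_diag (mulmxA (cnot12 R)) (cnot_diag (fun n => if odd n then expi (c / 2) else expi (- c / 2))) !mulmx_diag.
apply/matrixP => i j; rewrite !mxE Ef.
case4 i; case4 j; rewrite /= ?mulr0n ?mulr0 ?mulr1n //.
all: rewrite ?e0 ?e1 ?e2 ?e3 -!expiD; congr expi; rewrite /a /b /c /del.
all: lra.
Qed.

End S.

Theorem proposition1 (R : realType) :
  (forall z : 'rV[R[i]]_4,
      unitary_mx (diag_mx z) ->
      ((exists D1 D2 : 'M[R[i]]_2,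
           is_diag_mx D1 /\ unitary_mx D1 /\ is_diag_mx D2 /\ unitary_mx D2 /\
           diag_mx z = kron2 D1 D2)
       <-> z 0 0 * (z 0 1)^-1 * (z 0 2)^-1 * z 0 3 = 1)) /\
  (forall U : 'M[R[i]]_4,
      unitary_mx U -> is_diag_mx U ->
      exists c : seq (gate R), (size c <= 5)%N /\ implements_up_to_phase c U).
Proof.
split; [exact: part1 | exact: part2].
Qed.
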